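(* Let $K\subseteq L\subseteq M$ be finite extensions inside $\bar K$. If $M\cap\tilde L=L$ and $[M:L]=r_K(M)/r_K(L)$, then $M/L$ is Galois.
   Context: $K$ is a perfect field with a fixed algebraic closure $\bar K$. For a finite extension $L/K$, $\tilde L$ denotes its Galois closure in $\bar K$. Writing $L=K(\alpha)$ with $f$ the minimal polynomial of $\alpha$ over $K$, the cluster size $r_K(L)$ is the number of roots of $f$ lying in $L$ (independent of the choice of $\alpha$; it equals $|{\rm Aut}(L/K)|$). *)

(* Defs.v *)
From HB Require Import structures.
From mathcomp Require Import all_boot all_order all_algebra all_fingroup all_field.
Set Implicit Arguments. Unset Strict Implicit. Unset Printing Implicit Defensive.
Import GRing.Theory.
Local Open Scope ring_scope.

Definition perfect_field (F : fieldType) : Prop :=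
  forall p : nat, p \in [pchar F] -> forall x : F, exists y : F, y ^+ p = x.

(* Ambient field: E is a finite normal (splitting-field) extension of the base
   field F = 1%VS, playing the role of (a large enough finite piece of) the
   algebraic closure.  Subfields of E are the finite extensions of F in E. *)

Definition galois_closure (F : fieldType) (E : splittingFieldType F)
  (L : {subfield E}) : {subfield E} :=
  agenv (\sum_(s in ('Gal({:E} / 1%VS))%g) (s @: L))%VS.

(* In mathcomp, 'Gal(L / 1) is the group of
   automorphisms of L fixing F (restrictions of automorphisms of E mapping L
   onto L; since E/F is normal, every automorphism of L over F arises so). *)
Definition cluster_size (F : fieldType) (E : splittingFieldType F)
  (L : {subfield E}) : nat := #|('Gal(L / 1%VS))%g|.

(* Main.v *)
Require Import Defs.
From HB Require Import structures.
From mathcomp Require Import all_boot all_order all_algebra all_fingroup all_field.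
From Stdlib Require Import Lia.
Local Open Scope ring_scope.
Import GRing.Theory Num.Theory.

Lemma perfect_sep (F : fieldType) (E : splittingFieldType F) :
  perfect_field F -> separable 1 {:E}.
Proof.
move=> perf; apply/separableP => x _.
apply/negPn/negP => /separablePn_pchar [p pcharEp [g g1 Dq]].
have pcharFp : p \in [pchar F] by rewrite -(fmorph_pchar (in_alg E)).
have p_pr := pcharf_prime pcharEp; have p_gt1 := prime_gt1 p_pr.
have proot : forall a, a \in 1%VS -> exists b : E, (b \in 1%VS) && (b ^+ p == a).
  move=> a /vlineP [k ->]; have [y hy] := perf p pcharFp k.
  exists (y *: 1); apply/andP; split; first by rewrite rpredZ ?mem1v.
  by rewrite -[y *: 1]/(in_alg E y) -rmorphXn hy.
pose h := \poly_(i < size g) xchoose (proot g`_i (polyOverP g1 i)).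
have hi i : h`_i ^+ p = g`_i.
  rewrite coef_poly; case: ltnP => hi.
    by have /andP[_ /eqP] := xchooseP (proot g`_i (polyOverP g1 i)).
  by rewrite expr0n gtn_eqF ?prime_gt0 // nth_default.
have h1 : h \is a polyOver 1%VS.
  apply/polyOverP => i; rewrite coef_poly; case: ifP => _; last exact: rpred0.
  by have /andP[] := xchooseP (proot g`_i (polyOverP g1 i)).
have pcharPp : p \in [pchar {poly E}] := rmorph_pchar polyC pcharEp.
have Dh : h ^+ p = g \Po 'X^p.
  rewrite -(pFrobenius_autE pcharPp) {1}[h]poly_def rmorph_sum comp_polyE /=.
  apply: eq_bigr => i _; rewrite -!mul_polyC rmorphM /= !pFrobenius_autE -polyC_exp.
  have /andP[_ /eqP ->] := xchooseP (proot g`_i (polyOverP g1 i)).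
  by rewrite -!exprM mulnC.
rewrite -Dh in Dq.
have q0 : minPoly 1 x != 0 by rewrite monic_neq0 ?monic_minPoly.
have h0 : h != 0 by apply: contra_neq q0 => h0; rewrite Dq h0 expr0n gtn_eqF ?prime_gt0.
have rh : root h x.
  have := root_minPoly 1 x; by rewrite Dq rootE horner_exp expf_eq0 => /andP[].
have := dvdp_leq h0 (minPoly_dvdp h1 rh).
have := size_exp h p; rewrite -Dq => szq.
have sq2 : (1 < size (minPoly 1 x))%N.
  rewrite ltnNge; apply/negP => /size1_polyC Dc.
  have := root_minPoly 1 x; rewrite Dc rootC.
  have := monic_minPoly 1 x; rewrite Dc monicE lead_coefC => /eqP ->.
  by rewrite coefC /= oner_eq0.
move: szq sq2; case: (size (minPoly 1 x)) => // n /= -> le1 le2.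
move: le1 le2; case: (size h) => [|m] /=; first by rewrite mul0n.
rewrite -multE; move: p_gt1 => /leP p_gt1 /leP le1 /leP le2; exfalso; nia.
Qed.

Lemma gal_full (F : fieldType) (E : splittingFieldType F) :
  perfect_field F -> galois 1 {:E}.
Proof. by move=> perf; rewrite /galois sub1v perfect_sep // normalFieldf. Qed.

Lemma cluster_card (F : fieldType) (E : splittingFieldType F)
  (galE : galois 1 {:E}) (X : {subfield E}) :
  (#|('Gal(X / 1))%g| * #|('Gal({:E} / X))%g| =
     #|('N_('Gal({:E} / 1))('Gal({:E} / X)))%g|)%N.
Proof.
set G := 'Gal({:E} / 1)%G; set H := 'Gal({:E} / X)%G.
set N := 'N_G(H)%G.
have galX : galois X {:E} by apply: galoisS galE; rewrite sub1v subvf.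
have fixH : fixedField H = X by apply/galois_fixedField.
have galK0 : galois (fixedField N) {:E} := fixedField_galois N.
have GK0 : ('Gal({:E} / fixedField N) = N)%g := gal_fixedField N.
have sHN : H \subset N by rewrite subsetI galS ?sub1v // normG.
have nHN : N \subset ('N(H))%g := subsetIr _ _.
have nsHN : (H <| 'Gal({:E} / fixedField N))%g by rewrite GK0 /normal sHN.
have sK0X : (fixedField N <= X)%VS by rewrite -fixH fixedFieldS.
have nK0X : normalField (fixedField N) X.
  by have := normal_fixedField_galois galK0 nsHN; rewrite fixH => /and3P[].
have iso := normalField_isog galK0 (M := X) (introT andP (conj sK0X (subvf X))) nK0X.
rewrite GK0 in iso.
have eqGal : ('Gal(X / fixedField N) = 'Gal(X / 1))%g.
  apply/eqP; rewrite eqEsubset galS ?sub1v //=; apply/subsetP => x xG.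
  have hom1 : kHom 1 X x by rewrite -gal_kHom ?sub1v.
  have [y yG Dy] := kHom_to_gal (K := 1%AS) (M := X) (E := {:E})
     (introT andP (conj (sub1v X) (subvf X))) (normalFieldf 1) hom1.
  have yX : (y @: X)%VS = X by rewrite -(eq_in_limg Dy) limg_gal.
  have yN : y \in N by rewrite inE yG /=; apply/normP; rewrite gal_conjg yX.
  rewrite gal_kHom //; apply/kAHomP => a K0a.
  rewrite Dy ?(subvP sK0X) //.
  by apply: (fixed_gal (subvf _) _ K0a); rewrite GK0.
by rewrite -eqGal -(card_isog iso) card_quotient // mulnC Lagrange.
Qed.

Theorem theorem6p18 (F : fieldType) (E : splittingFieldType F)
  (L M : {subfield E}) :
  perfect_field F ->
  (L <= M)%VS ->
  (M :&: galois_closure L)%VS = L ->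
  ((\dim_L M)%:R : rat) = (cluster_size M)%:R / (cluster_size L)%:R ->
  galois L M.
Proof.
move=> perf sLM capL dimH.
have galE := @gal_full F E perf.
set G := 'Gal({:E} / 1)%G; set HL := 'Gal({:E} / L)%G; set HM := 'Gal({:E} / M)%G.
have galL : galois L {:E} by apply: galoisS galE; rewrite sub1v subvf.
have galM : galois M {:E} by apply: galoisS galE; rewrite sub1v subvf.
have fixM : fixedField HM = M by apply/galois_fixedField.
have sNMNL : ('N_G(HM) \subset 'N_G(HL))%g.
  apply/subsetP => g; rewrite !in_setI => /andP[gG /normP nHMg]; rewrite gG /=.
  apply/normP.
  have gM : (g @: M)%VS = M.
    rewrite gal_conjg in nHMg.
    have galgM : galois (g @: M)%VS {:E} by apply: galoisS galE; rewrite sub1v subvf.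
    by rewrite -{2}fixM -nHMg; apply/esym/galois_fixedField.
  have gL : (g @: L)%VS = L.
    apply/eqP; rewrite eqEdim limg_dim_eq ?leqnn ?andbT; last first.
      by rewrite (eqP (AEnd_lker0 _)) capv0.
    rewrite -{2}capL subv_cap; apply/andP; split; first by rewrite -gM limgS.
    rewrite /galois_closure; apply: subv_trans (sub_agenv _).
    exact: (sumv_sup g).
  by rewrite gal_conjg gL.
have dimLE := galois_dim galL; have dimME := galois_dim galM.
have dtower : (\dim_L {:E} = \dim_L M * \dim_M {:E})%N.
  have [k1 Hb] := dvdnP (field_dimS sLM).
  have [k2 Hc] := dvdnP (field_dimS (subvf M)).
  have a0 := adim_gt0 L.
  have b0 : (0 < k1 * \dim L)%N by rewrite -Hb adim_gt0.
  by rewrite Hc Hb [X in _ = _ * X]mulnK // mulnA !mulnK // mulnC.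
have cL0 : (0 < cluster_size L)%N by rewrite /cluster_size cardG_gt0.
have dc : (\dim_L M * cluster_size L = cluster_size M)%N.
  have cLr : (cluster_size L)%:R != 0 :> rat by rewrite pnatr_eq0 -lt0n.
  apply/eqP; rewrite -(eqr_nat rat) natrM.
  by rewrite dimH divfK.
have cardL := @cluster_card F E galE L; have cardM := @cluster_card F E galE M.
have cardEq : #|('N_G(HL))%g| = #|('N_G(HM))%g|.
  rewrite -cardL -cardM -dimLE -dimME dtower.
  rewrite -[#|('Gal(L / 1))%g|]/(cluster_size L) -[#|('Gal(M / 1))%g|]/(cluster_size M).
  by rewrite -dc mulnCA mulnA.
have eqN : ('N_G(HM) = 'N_G(HL))%g.
  by apply/eqP; rewrite eqEcard sNMNL cardEq leqnn.
have nsHM : (HM <| HL)%g.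
  rewrite /normal galS //=; apply: subset_trans (subsetIr G _).
  by rewrite eqN subsetI galS ?sub1v // normG.
by have := normal_fixedField_galois galL nsHM; rewrite fixM.
Qed.
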